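(* Let $(x,q)\in\mathbf J$ with $q$ not an integer, and assume the greedy expansion $(b_i(x,q))$ is infinite (has infinitely many nonzero digits). If $(y_n,r_n)$ is any sequence in $\mathbf J$ converging to $(x,q)$, then both $(a_i(y_n,r_n))_{i\ge1}$ and $(b_i(y_n,r_n))_{i\ge1}$ converge coordinate-wise to $(b_i(x,q))_{i\ge1}=(a_i(x,q))_{i\ge1}$.
   Context: For real $q>1$ let $\lceil q\rceil$ be the smallest integer $\ge q$ and $A_q=\{0,\ldots,\lceil q\rceil-1\}$. Let $\mathbf J$ be the set of $(x,q)$ with $q>1$ and $x\in J_q:=[0,(\lceil q\rceil-1)/(q-1)]$. For $(x,q)\in\mathbf J$: the quasi-greedy expansion $(a_i(x,q))$ is $0^\infty$ if $x=0$, and for $x>0$, recursively $a_n(x,q)$ is the largest element of $A_q$ with $\sum_{i=1}^n a_i(x,q)q^{-i}<x$; the greedy expansion $(b_i(x,q))$ is defined recursively with $b_n(x,q)$ the largest element of $A_q$ with $\sum_{i=1}^n b_i(x,q)q^{-i}\le x$. *)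

(* Defs.v *)
From Stdlib Require Import Reals Lra Lia ZArith.
Open Scope R_scope.

Definition maxdigit (q : R) : nat := Z.to_nat (Zceil q - 1).

Definition in_alphabet (q : R) (d : nat) : Prop := (d <= maxdigit q)%nat.

Definition inJ (x q : R) : Prop :=
  1 < q /\ 0 <= x /\ x <= (IZR (Zceil q) - 1) / (q - 1).

Fixpoint largest (M : nat) (p : nat -> bool) : nat :=
  match M with
  | O => O
  | S m => if p (S m) then S m else largest m p
  end.

Definition Rleb (a b : R) : bool := if Rle_dec a b then true else false.
Definition Rltb (a b : R) : bool := if Rlt_dec a b then true else false.

(* Greedy expansion.  greedy_sum x q n = sum_{i=1}^n b_i q^{-i};
   the digit b_{n+1} is the largest d in A_q with
   greedy_sum n + d q^{-(n+1)} <= x. *)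
Definition greedy_next (x q s : R) (n : nat) : nat :=
  largest (maxdigit q) (fun d => Rleb (s + INR d / q ^ n) x).

Fixpoint greedy_sum (x q : R) (n : nat) : R :=
  match n with
  | O => 0
  | S m => let s := greedy_sum x q m in
           s + INR (greedy_next x q s (S m)) / q ^ (S m)
  end.

(* b x q i = b_i(x,q) for i >= 1 (index 0 is unused and set to 0) *)
Definition b (x q : R) (i : nat) : nat :=
  match i with
  | O => O
  | S m => greedy_next x q (greedy_sum x q m) (S m)
  end.

(* Quasi-greedy expansion: 0^infty if x = 0; otherwise the digit a_{n+1}
   is the largest d in A_q with qg_sum n + d q^{-(n+1)} < x. *)
Definition qg_next (x q s : R) (n : nat) : nat :=
  if Req_EM_T x 0 then O
  else largest (maxdigit q) (fun d => Rltb (s + INR d / q ^ n) x).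

Fixpoint qg_sum (x q : R) (n : nat) : R :=
  match n with
  | O => 0
  | S m => let s := qg_sum x q m in
           s + INR (qg_next x q s (S m)) / q ^ (S m)
  end.

Definition a (x q : R) (i : nat) : nat :=
  match i with
  | O => O
  | S m => qg_next x q (qg_sum x q m) (S m)
  end.

(* Main.v *)
Require Import Defs.
From Stdlib Require Import Reals Lra Lia ZArith.
From Coquelicot Require Import Coquelicot.
Open Scope R_scope.

Definition ev (P : nat -> Prop) := exists N, forall n, (N <= n)%nat -> P n.

Lemma ev_and (P Q : nat -> Prop) : ev P -> ev Q -> ev (fun n => P n /\ Q n).
Proof.
  intros [N1 H1] [N2 H2]. exists (N1 + N2)%nat. intros n Hn. split; [apply H1|apply H2]; lia.
Qed.

Lemma ev_mono (P Q : nat -> Prop) : ev P -> (forall n, P n -> Q n) -> ev Q.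
Proof. intros [N H] HPQ. exists N. auto. Qed.

Lemma ev_fin (P : nat -> nat -> Prop) (M : nat) :
  (forall d, (d <= M)%nat -> ev (P d)) -> ev (fun n => forall d, (d <= M)%nat -> P d n).
Proof.
  induction M as [|M IH]; intros H.
  - destruct (H 0%nat (le_n _)) as [N HN]. exists N. intros n Hn d Hd.
    assert (d = 0%nat) by lia. subst. auto.
  - destruct (IH (fun d Hd => H d (le_S _ _ Hd))) as [N1 H1].
    destruct (H (S M) (le_n _)) as [N2 H2]. exists (N1 + N2)%nat. intros n Hn d Hd.
    destruct (Nat.eq_dec d (S M)). subst; apply H2; lia. apply H1; lia.
Qed.

Lemma ev_pos (u : nat -> R) L : Un_cv u L -> 0 < L -> ev (fun n => 0 < u n).
Proof.
  intros H HL. destruct (H L HL) as [N HN]. exists N. intros n Hn.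
  specialize (HN n Hn). unfold R_dist in HN. apply Rabs_def2 in HN. lra.
Qed.

Lemma cv_pow (r : nat -> R) q j : Un_cv r q -> is_lim_seq (fun n => r n ^ j) (q ^ j).
Proof.
  intros H. apply is_lim_seq_Reals in H. induction j as [|j IH]; simpl.
  - apply is_lim_seq_const.
  - apply (is_lim_seq_mult' _ _ _ _ H IH).
Qed.

Lemma largest_le M p : (largest M p <= M)%nat.
Proof. induction M; simpl; [lia|]. destruct (p (S M)); lia. Qed.

Lemma largest_true M p : (1 <= largest M p)%nat -> p (largest M p) = true.
Proof.
  induction M; simpl; [lia|]. destruct (p (S M)) eqn:E; auto.
Qed.

Lemma largest_above M p d : (largest M p < d <= M)%nat -> p d = false.
Proof.
  induction M; simpl; [lia|]. destruct (p (S M)) eqn:E; [lia|].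
  intros Hd. destruct (Nat.eq_dec d (S M)). subst; auto. apply IHM; lia.
Qed.

Lemma largest_char M p v : (v <= M)%nat ->
  (forall d, (1 <= d <= M)%nat -> (p d = true <-> (d <= v)%nat)) -> largest M p = v.
Proof.
  induction M as [|M IH]; intros Hv H; simpl.
  - lia.
  - destruct (p (S M)) eqn:E.
    + apply (H (S M)) in E; lia.
    + assert (~ (S M <= v)%nat). { intro C. apply (H (S M)) in C; [congruence|lia]. }
      apply IH; [lia|]. intros d Hd. apply H; lia.
Qed.

Lemma Rleb_iff a0 b0 : Rleb a0 b0 = true <-> a0 <= b0.
Proof. unfold Rleb. destruct (Rle_dec a0 b0); split; intros; try congruence; try lra. Qed.
Lemma Rltb_iff a0 b0 : Rltb a0 b0 = true <-> a0 < b0.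
Proof. unfold Rltb. destruct (Rlt_dec a0 b0); split; intros; try congruence; try lra. Qed.

Definition Good (t y s : R) (j : nat) (M bv : nat) :=
  forall d, (1 <= d <= M)%nat ->
    ((d <= bv)%nat -> s + INR d / t ^ j < y) /\ ((bv < d)%nat -> y < s + INR d / t ^ j).

Lemma digit_lemma t y s j bv :
  (bv <= maxdigit t)%nat -> Good t y s j (maxdigit t) bv ->
  greedy_next y t s j = bv /\ (y <> 0 -> qg_next y t s j = bv).
Proof.
  intros Hb HG. split.
  - unfold greedy_next. apply largest_char; auto. intros d Hd. rewrite Rleb_iff.
    destruct (HG d Hd) as [H1 H2]. split; intros.
    + destruct (le_lt_dec d bv); auto. specialize (H2 l). lra.
    + specialize (H1 H). lra.
  - intros Hy. unfold qg_next. destruct (Req_EM_T y 0); [contradiction|].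
    apply largest_char; auto. intros d Hd. rewrite Rltb_iff.
    destruct (HG d Hd) as [H1 H2]. split; intros.
    + destruct (le_lt_dec d bv); auto. specialize (H2 l). lra.
    + specialize (H1 H). lra.
Qed.

Section Main.
Variables (x q : R).

Fixpoint Sb (t : R) (k : nat) : R :=
  match k with O => 0 | S m => Sb t m + INR (b x q (S m)) / t ^ (S m) end.

Lemma greedy_Sb k : greedy_sum x q k = Sb q k.
Proof. induction k; simpl; auto. rewrite IHk. reflexivity. Qed.

Lemma b_S k : b x q (S k) = largest (maxdigit q)
   (fun d => Rleb (Sb q k + INR d / q ^ (S k)) x).
Proof. simpl. rewrite greedy_Sb. reflexivity. Qed.

Lemma cv_Sb (r : nat -> R) k : Un_cv r q -> q <> 0 -> is_lim_seq (fun n => Sb (r n) k) (Sb q k).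
Proof.
  intros H Hq. induction k as [|k IH]; simpl.
  - apply is_lim_seq_const.
  - apply is_lim_seq_plus'; auto. apply is_lim_seq_div'.
    apply is_lim_seq_const. apply (cv_pow r q (S k) H). exact (pow_nonzero q (S k) Hq).
Qed.

Hypothesis Hq1 : 1 < q.
Hypothesis Hx0 : 0 <= x.
Hypothesis Hinf : forall N : nat, exists i : nat, (N < i)%nat /\ b x q i <> 0%nat.

Lemma qpow_pos j : 0 < q ^ j.
Proof. apply pow_lt; lra. Qed.

Lemma Sb_le k : Sb q k <= x.
Proof.
  induction k as [|k IH].
  - simpl. exact Hx0.
  - change (Sb q k + INR (b x q (S k)) / q ^ S k <= x).
    destruct (le_lt_dec 1 (b x q (S k))) as [l|l].
    + rewrite b_S in *. apply largest_true in l. apply Rleb_iff in l. exact l.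
    + assert (b x q (S k) = 0%nat) by lia. rewrite H. simpl. lra.
Qed.

Lemma Sb_lt k : Sb q k < x.
Proof.
  destruct (Rlt_dec (Sb q k) x); auto. exfalso.
  assert (Hk : Sb q k = x) by (pose proof (Sb_le k); lra).
  assert (forall j, Sb q (k + j) = x /\ b x q (S (k + j)) = 0%nat). {
    induction j as [|j IH].
    - rewrite Nat.add_0_r. split; auto. rewrite b_S.
      destruct (le_lt_dec 1 (largest (maxdigit q) (fun d => Rleb (Sb q k + INR d / q ^ (S k)) x))) as [l|l]; [|lia].
      pose proof (largest_true _ _ l) as l2. apply Rleb_iff in l2.
      apply le_INR in l. change (INR 1) with 1 in l.
      match type of l with (_ <= INR ?L) =>
        assert (0 < INR L / q ^ (S k)) by (apply Rdiv_lt_0_compat; [lra|apply qpow_pos]) end.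
      lra.
    - destruct IH as [H1 H2]. assert (H3 : Sb q (k + S j) = x).
      { rewrite Nat.add_succ_r. change (Sb q (k+j) + INR (b x q (S (k+j))) / q ^ S (k+j) = x).
        rewrite H2, H1. change (INR 0) with 0. unfold Rdiv. rewrite Rmult_0_l. lra. }
      split; auto. rewrite b_S.
      destruct (le_lt_dec 1 (largest (maxdigit q) (fun d => Rleb (Sb q (k + S j) + INR d / q ^ (S (k + S j))) x))) as [l|l]; [|lia].
      pose proof (largest_true _ _ l) as l2. apply Rleb_iff in l2.
      apply le_INR in l. change (INR 1) with 1 in l.
      match type of l with (_ <= INR ?L) =>
        assert (0 < INR L / q ^ (S (k + S j))) by (apply Rdiv_lt_0_compat; [lra|apply qpow_pos]) end.
      lra. }
  destruct (Hinf k) as [i [Hi Hb]]. destruct i as [|m]; [lia|].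
  destruct (H (m - k)%nat) as [_ H2]. replace (k + (m - k))%nat with m in H2 by lia. congruence.
Qed.

Lemma x_pos : 0 < x.
Proof. pose proof (Sb_lt 0). simpl in H. lra. Qed.

Lemma Good_x k : Good q x (Sb q k) (S k) (maxdigit q) (b x q (S k)).
Proof.
  intros d Hd. split; intros H.
  - pose proof (Sb_lt (S k)) as Hl. simpl in Hl.
    apply le_INR in H.
    assert (INR d / q ^ S k <= INR (b x q (S k)) / q ^ S k).
    { unfold Rdiv. apply Rmult_le_compat_r; auto. left. apply Rinv_0_lt_compat, qpow_pos. }
    simpl in *. lra.
  - rewrite b_S in H. pose proof (largest_above _ _ d (conj H (proj2 Hd))).
    destruct (Rle_dec (Sb q k + INR d / q ^ S k) x) as [l|l].
    + apply Rleb_iff in l. congruence.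
    + lra.
Qed.

Lemma bx_le k : (b x q (S k) <= maxdigit q)%nat.
Proof. rewrite b_S. apply largest_le. Qed.

Lemma qg_Sb k : qg_sum x q k = Sb q k /\ a x q (S k) = b x q (S k).
Proof.
  induction k as [|k IH].
  - simpl qg_sum. split; auto. simpl a. change (qg_next x q 0 1 = b x q 1).
    destruct (digit_lemma q x (Sb q 0) 1 (b x q 1) (bx_le 0) (Good_x 0)) as [_ H].
    apply H. pose proof x_pos; lra.
  - destruct IH as [H1 H2]. assert (H3 : qg_sum x q (S k) = Sb q (S k)).
    { change (qg_sum x q k + INR (qg_next x q (qg_sum x q k) (S k)) / q^S k = Sb q k + INR (b x q (S k)) / q^S k).
      change (qg_next x q (qg_sum x q k) (S k) = b x q (S k)) in H2. rewrite H2, H1. reflexivity. }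
    split; auto. change (qg_next x q (qg_sum x q (S k)) (S (S k)) = b x q (S (S k))). rewrite H3.
    destruct (digit_lemma q x (Sb q (S k)) (S (S k)) (b x q (S (S k))) (bx_le (S k)) (Good_x (S k))) as [_ H].
    apply H. pose proof x_pos; lra.
Qed.

Hypothesis Hnz : forall z : Z, q <> IZR z.
Variables (y r : nat -> R).
Hypothesis Hy : Un_cv y x.
Hypothesis Hr : Un_cv r q.

Lemma ev_md : ev (fun n => maxdigit (r n) = maxdigit q /\ 0 < r n).
Proof.
  set (z := Zceil q). pose proof (Zceil_bound q). fold z in H.
  assert (q <> IZR z) by apply Hnz.
  assert (Hu : Un_cv (fun n => r n - (IZR z - 1)) (q - (IZR z - 1))).
  { apply is_lim_seq_Reals. apply is_lim_seq_minus'. apply is_lim_seq_Reals; auto. apply is_lim_seq_const. }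
  assert (Hv : Un_cv (fun n => IZR z - r n) (IZR z - q)).
  { apply is_lim_seq_Reals. apply is_lim_seq_minus'. apply is_lim_seq_const. apply is_lim_seq_Reals; auto. }
  assert (Hw : Un_cv (fun n => r n - 1) (q - 1)).
  { apply is_lim_seq_Reals. apply is_lim_seq_minus'. apply is_lim_seq_Reals; auto. apply is_lim_seq_const. }
  pose proof (ev_pos _ _ Hu ltac:(lra)). pose proof (ev_pos _ _ Hv ltac:(lra)).
  pose proof (ev_pos _ _ Hw ltac:(lra)).
  eapply ev_mono. apply ev_and. apply ev_and. exact H1. exact H2. exact H3.
  simpl. intros n [[A B] C]. split; [|lra]. unfold maxdigit. rewrite (Zceil_eq z (r n)); [|lra].
  reflexivity.
Qed.

Lemma ev_Good k : ev (fun n => Good (r n) (y n) (Sb (r n) k) (S k) (maxdigit q) (b x q (S k))).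
Proof.
  assert (Hq0 : q <> 0) by lra.
  apply ev_mono with (P := fun n => forall d, (d <= maxdigit q)%nat ->
     ((1 <= d)%nat -> (d <= b x q (S k))%nat -> Sb (r n) k + INR d / r n ^ S k < y n) /\
     ((1 <= d)%nat -> (b x q (S k) < d)%nat -> y n < Sb (r n) k + INR d / r n ^ S k)).
  2:{ intros n H d Hd. destruct (H d (proj2 Hd)). split; intros; auto. apply H0; lia. apply H1; lia. }
  apply ev_fin. intros d Hd.
  assert (Hc : is_lim_seq (fun n => Sb (r n) k + INR d / r n ^ S k) (Sb q k + INR d / q ^ S k)).
  { apply is_lim_seq_plus'. apply cv_Sb; auto. apply is_lim_seq_div'. apply is_lim_seq_const.
    apply cv_pow; auto. exact (pow_nonzero q (S k) Hq0). }
  destruct (le_lt_dec 1 d) as [d1|d1].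
  2:{ exists 0%nat. intros; split; intros; lia. }
  destruct (Good_x k d (conj d1 Hd)) as [G1 G2].
  destruct (le_lt_dec d (b x q (S k))) as [l|l].
  - specialize (G1 l).
    assert (Hu : Un_cv (fun n => y n - (Sb (r n) k + INR d / r n ^ S k)) (x - (Sb q k + INR d / q ^ S k))).
    { apply is_lim_seq_Reals. apply is_lim_seq_minus'; auto. apply is_lim_seq_Reals; auto. }
    pose proof (ev_pos _ _ Hu) as HH. assert (0 < x - (Sb q k + INR d / q ^ S k)) by lra. specialize (HH H). eapply ev_mono. exact HH. cbv beta. intros n Hn. split; intros. lra. lia.
  - specialize (G2 l).
    assert (Hu : Un_cv (fun n => (Sb (r n) k + INR d / r n ^ S k) - y n) ((Sb q k + INR d / q ^ S k) - x)).
    { apply is_lim_seq_Reals. apply is_lim_seq_minus'; auto. apply is_lim_seq_Reals; auto. }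
    pose proof (ev_pos _ _ Hu) as HH. assert (0 < (Sb q k + INR d / q ^ S k) - x) by lra. specialize (HH H). eapply ev_mono. exact HH. cbv beta. intros n Hn. split; intros. lia. lra.
Qed.

Lemma ev_digits k : ev (fun n => greedy_sum (y n) (r n) k = Sb (r n) k /\ qg_sum (y n) (r n) k = Sb (r n) k)
  -> ev (fun n => greedy_next (y n) (r n) (greedy_sum (y n) (r n) k) (S k) = b x q (S k) /\
                  qg_next (y n) (r n) (qg_sum (y n) (r n) k) (S k) = b x q (S k)).
Proof.
  intros H. pose proof (ev_pos _ _ Hy x_pos) as Hyp.
  eapply ev_mono. apply ev_and. apply ev_and. apply ev_and. exact H. exact ev_md. exact (ev_Good k). exact Hyp.
  simpl. intros n [[[[E1 E2] [M1 M2]] G] P]. rewrite E1, E2.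
  rewrite <- M1 in G. assert (Hb := bx_le k). rewrite <- M1 in Hb.
  destruct (digit_lemma _ _ _ _ _ Hb G) as [D1 D2]. split; auto. apply D2; lra.
Qed.

Lemma ev_sums k : ev (fun n => greedy_sum (y n) (r n) k = Sb (r n) k /\ qg_sum (y n) (r n) k = Sb (r n) k).
Proof.
  induction k as [|k IH].
  - exists 0%nat. intros; simpl; auto.
  - eapply ev_mono. apply ev_and. exact IH. exact (ev_digits k IH).
    simpl. intros n [[E1 E2] [D1 D2]]. rewrite D1, D2, E1, E2. auto.
Qed.

End Main.

Theorem proposition2p6 (x q : R) (y r : nat -> R) :
  inJ x q ->
  (forall z : Z, q <> IZR z) ->
  (forall N : nat, exists i : nat, (N < i)%nat /\ b x q i <> 0%nat) ->
  (forall n : nat, inJ (y n) (r n)) ->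
  Un_cv y x -> Un_cv r q ->
  (forall i : nat, (1 <= i)%nat -> a x q i = b x q i) /\
  (forall i : nat, (1 <= i)%nat ->
     exists N : nat, forall n : nat, (N <= n)%nat ->
       a (y n) (r n) i = b x q i /\ b (y n) (r n) i = b x q i).
Proof.
  intros HJ Hnz Hinf HJn Hy Hr. destruct HJ as [Hq1 [Hx0 _]]. split.
  - intros i Hi. destruct i as [|k]; [lia|]. apply (qg_Sb x q Hq1 Hx0 Hinf k).
  - intros i Hi. destruct i as [|k]; [lia|].
    destruct (ev_digits x q Hq1 Hx0 Hinf Hnz y r Hy Hr k (ev_sums x q Hq1 Hx0 Hinf Hnz y r Hy Hr k)) as [N HN].
    exists N. intros n Hn. destruct (HN n Hn). simpl. auto.
Qed.
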